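(* There exists an invertible $22\times22$ binary matrix such that the corresponding linear kernel has partial distance sequence $(1,2,2,2,2,2,4,4,4,4,4,4,8,8,8,8,8,8,8,12,12,16)$. Consequently $E_{22}\ge\frac1{22}\sum_{i=0}^{21}\log_{22}D_{min}^{(i)}\approx0.50118$.
   Context: A kernel of dimension $\ell$ is a bijection $g:\{0,1\}^\ell\to\{0,1\}^\ell$; a linear kernel is $g({\bf u})={\bf u}G$ over $\mathbb{F}_2$ for an invertible $\ell\times\ell$ binary matrix $G$. ${\bf a}\bullet{\bf b}$ denotes concatenation, $d_H$ Hamming distance. Partial distances: $D_{min}^{(i)}=\min\{d_H(g({\bf w}\bullet 0\bullet{\bf u}),g({\bf w}\bullet 1\bullet {\bf v})) : {\bf w}\in\{0,1\}^i,\ {\bf u},{\bf v}\in\{0,1\}^{\ell-i-1}\}$, $i=0,\dots,\ell-1$; exponent $E(g)=\frac1\ell\sum_{i}\log_\ell D_{min}^{(i)}$; $E_\ell=\max_g E(g)$ over all kernels of dimension $\ell$. *)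

(* Defs.v *)
From HB Require Import structures.
From mathcomp Require Import all_boot all_order all_algebra.
Set Implicit Arguments. Unset Strict Implicit. Unset Printing Implicit Defensive.
Import GRing.Theory.

Definition dH (l : nat) (x y : 'rV['F_2]_l) : nat :=
  #|[set j : 'I_l | x ord0 j != y ord0 j]|.

Definition linker (l : nat) (G : 'M['F_2]_l) : 'rV['F_2]_l -> 'rV['F_2]_l :=
  fun u => (u *m G)%R.

(* x = w.0.u and y = w.1.v for some prefix w of length i and suffixes u, v:
   i.e. x and y agree on coordinates j < i, x_i = 0 and y_i = 1. *)
Definition pd_pair (l : nat) (i : 'I_l) (x y : 'rV['F_2]_l) : bool :=
  [forall j : 'I_l, (j < i)%N ==> (x ord0 j == y ord0 j)] &&
  (x ord0 i == 0%R) && (y ord0 i == 1%R).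

(* The minimum is
   taken over a nonempty set of Hamming distances, all of which are <= l,
   so the neutral element l of the min does not affect the value. *)
Definition pdist (l : nat) (g : 'rV['F_2]_l -> 'rV['F_2]_l) (i : 'I_l) : nat :=
  \big[minn/l]_(x : 'rV['F_2]_l)
     \big[minn/l]_(y : 'rV['F_2]_l | pd_pair i x y) dH (g x) (g y).

Definition pdist_seq (l : nat) (g : 'rV['F_2]_l -> 'rV['F_2]_l) : seq nat :=
  [seq pdist g i | i <- enum 'I_l].

(* Main.v *)
Require Import Defs.
From HB Require Import structures.
From mathcomp Require Import all_boot all_order all_algebra.
Set Implicit Arguments. Unset Strict Implicit. Unset Printing Implicit Defensive.
Import GRing.Theory.

Fixpoint xorl (s t : seq bool) : seq bool :=
  match s, t with
  | a :: s', b :: t' => xorb a b :: xorl s' t'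
  | [::], _ => t
  | _, [::] => s
  end.

Fixpoint allcomb (P : seq bool -> bool) (acc : seq bool) (rs : seq (seq bool)) : bool :=
  match rs with
  | [::] => P acc
  | r :: rs' => allcomb P acc rs' && allcomb P (xorl acc r) rs'
  end.

Fixpoint xsum (b : seq bool) (rs : seq (seq bool)) : seq bool :=
  match b, rs with
  | c :: b', r :: rs' => if c then xorl r (xsum b' rs') else xsum b' rs'
  | _, _ => [::]
  end.

Definition Dvals : seq nat :=
  [:: 1; 2; 2; 2; 2; 2; 4; 4; 4; 4; 4; 4; 8; 8; 8; 8; 8; 8; 8; 12; 12; 16]%N.
Definition rowsL : seq (seq bool) := [::
  [:: true; false; false; false; false; false; false; false; false; false; false; false; false; false; false; false; false; false; false; false; false; false];
  [:: false; false; false; false; false; false; false; false; false; false; false; false; false; false; false; false; false; false; false; false; true; true];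
  [:: false; false; false; false; false; false; true; false; false; false; false; false; true; false; false; false; false; false; false; false; false; false];
  [:: true; false; false; false; false; false; false; false; false; false; true; false; false; false; false; false; false; false; false; false; false; false];
  [:: true; false; false; false; false; false; false; false; false; false; false; true; false; false; false; false; false; false; false; false; false; false];
  [:: true; false; false; false; false; false; false; false; false; false; false; false; false; false; false; false; false; false; false; true; false; false];
  [:: false; false; false; false; false; false; false; false; false; true; false; false; false; false; false; false; true; true; true; false; false; false];
  [:: true; false; false; false; true; true; false; false; false; false; false; false; false; false; true; false; false; false; false; false; false; false];
  [:: false; false; false; false; false; false; false; true; false; false; false; false; true; false; false; false; false; false; false; true; false; true];
  [:: false; false; false; false; false; false; false; false; false; false; false; false; false; false; false; true; true; false; false; true; true; false];
  [:: false; false; false; false; true; false; false; false; false; false; false; false; false; false; false; true; false; true; false; false; true; false];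
  [:: false; true; false; false; false; false; false; false; false; false; false; true; false; false; true; false; false; false; false; false; false; true];
  [:: false; false; false; false; true; true; true; false; false; true; true; false; false; false; false; false; true; true; false; true; false; false];
  [:: false; false; false; false; false; true; false; false; true; false; true; false; true; false; false; false; false; true; false; true; true; true];
  [:: false; false; false; true; false; false; false; true; true; true; false; false; false; false; false; false; false; true; true; false; true; true];
  [:: false; false; true; false; false; false; false; true; false; false; false; true; false; false; true; true; true; false; false; true; false; true];
  [:: true; false; true; true; true; false; false; false; false; false; false; true; false; false; true; false; true; false; true; false; false; false];
  [:: false; false; false; true; false; true; false; true; true; false; false; true; false; false; false; true; false; false; false; true; true; false];
  [:: false; false; true; true; false; true; true; false; false; false; false; true; false; false; false; true; true; true; false; false; false; false];
  [:: false; true; false; false; true; true; true; false; true; true; false; true; false; true; false; false; true; false; true; true; false; true];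
  [:: true; false; true; true; false; true; true; false; false; false; false; false; true; true; true; false; true; true; true; false; false; true];
  [:: false; true; true; true; false; false; true; true; true; true; true; true; true; true; true; true; true; false; true; false; true; false]].
Definition wits : seq (seq bool) := [::
  [:: true; false; false; false; false; false; false; false; false; false; false; false; false; false; false; false; false; false; false; false; false; false];
  [:: false; true; false; false; false; false; false; false; false; false; false; false; false; false; false; false; false; false; false; false; false; false];
  [:: false; false; true; false; false; false; false; false; false; false; false; false; false; false; false; false; false; false; false; false; false; false];
  [:: false; false; false; true; false; false; false; false; false; false; false; false; false; false; false; false; false; false; false; false; false; false];
  [:: false; false; false; false; true; false; false; false; false; false; false; false; false; false; false; false; false; false; false; false; false; false];
  [:: false; false; false; false; false; true; false; false; false; false; false; false; false; false; false; false; false; false; false; false; false; false];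
  [:: false; false; false; false; false; false; true; false; false; false; false; false; false; false; false; false; false; false; false; false; false; false];
  [:: false; false; false; false; false; false; false; true; false; false; false; false; false; false; false; false; false; false; false; false; false; false];
  [:: false; false; false; false; false; false; false; false; true; false; false; false; false; false; false; false; false; false; false; false; false; false];
  [:: false; false; false; false; false; false; false; false; false; true; false; false; false; false; false; false; false; false; false; false; false; false];
  [:: false; false; false; false; false; false; false; false; false; false; true; false; false; false; false; false; false; false; false; false; false; false];
  [:: false; false; false; false; false; false; false; false; false; false; false; true; false; false; false; false; false; false; false; false; false; false];
  [:: false; false; false; false; false; false; false; false; false; false; false; false; true; false; false; false; false; false; false; false; false; false];
  [:: false; false; false; false; false; false; false; false; false; false; false; false; false; true; false; false; false; false; false; false; false; false];
  [:: false; false; false; false; false; false; false; false; false; false; false; false; false; false; true; false; false; false; false; false; false; false];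
  [:: false; false; false; false; false; false; false; false; false; false; false; false; false; false; false; true; false; false; false; false; false; false];
  [:: false; false; false; false; false; false; false; false; false; false; false; false; false; false; false; false; true; false; false; false; false; false];
  [:: false; false; false; false; false; false; false; false; false; false; false; false; false; false; false; false; false; true; false; false; false; false];
  [:: false; false; false; false; false; false; false; false; false; false; false; false; false; false; false; false; false; false; true; false; false; false];
  [:: false; false; false; false; false; false; false; false; false; false; false; false; false; false; false; false; false; false; false; true; false; false];
  [:: false; false; false; false; false; false; false; false; false; false; false; false; false; false; false; false; false; false; false; false; true; false];
  [:: false; false; false; false; false; false; false; false; false; false; false; false; false; false; false; false; false; false; false; false; false; true]].

Definition check_lo : bool :=
  all (fun i => allcomb (fun v => nth 0%N Dvals i <= count id v)%N
                  (nth [::] rowsL i) (drop i.+1 rowsL)) (iota 0 22).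

Definition check_wit : bool :=
  all (fun i => let wb := nth [::] wits i in
        [&& size wb == 22%N, all (fun j => ~~ nth false wb j) (iota 0 i),
            nth false wb i & count id (xsum wb rowsL) == nth 0%N Dvals i])
      (iota 0 22).

Lemma check_wit_ok : check_wit = true. Proof. by vm_compute. Qed.
Lemma check_lo_ok : check_lo = true. Proof. vm_compute. reflexivity. Qed.

Lemma nth_xorl s t j : nth false (xorl s t) j = xorb (nth false s j) (nth false t j).
Proof.
elim: s t j => [|a s IH] [|b t] [|j] //=; rewrite ?IH ?nth_nil ?addbF ?addFb //. all: try by case: a. all: try by case: b. all: by case: (nth false s j).
Qed.

Lemma xorl_nil s : xorl s [::] = s. Proof. by case: s. Qed.

Lemma xorlA s t u : xorl s (xorl t u) = xorl (xorl s t) u.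
Proof.
elim: s t u => [|a s IH] [|b t] [|c u] //=; rewrite ?IH ?xorl_nil //; by case: a; case: b; case: c.
Qed.

Lemma allcomb_sound P acc rs : allcomb P acc rs ->
  forall b, size b = size rs -> P (xorl acc (xsum b rs)).
Proof.
elim: rs acc => [|r rs IH] acc /=.
  by move=> H [|]//= _; rewrite xorl_nil.
move=> /andP[H1 H2] [|c b] //= [Hs]; case: c.
  by rewrite xorlA; apply: IH.
by apply: IH.
Qed.

Lemma xsum_nil b : xsum b [::] = [::]. Proof. by case: b. Qed.

Lemma xsum_drop i b rs : (forall j, (j < i)%N -> nth false b j = false) ->
  xsum b rs = xsum (drop i b) (drop i rs).
Proof.
elim: i b rs => [|i IH] b rs H; first by rewrite !drop0.
case: b H => [|c b] H; first by case: rs.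
case: rs => [|r rs]; first by rewrite /= xsum_nil.
have Hc := H 0%N isT; rewrite /= in Hc; rewrite /= Hc /=.
by apply: IH => j Hj; apply: (H j.+1).
Qed.

Lemma F2_cases (a : 'F_2) : a = 0%R \/ a = 1%R.
Proof.
case: a => [[|[|k]]] Hk; [left|right|]; try by apply/val_inj.
by [].
Qed.

Lemma F2_xor (a b : bool) : ((xorb a b)%:R : 'F_2)%R = (a%:R + b%:R)%R.
Proof. by case: a; case: b; rewrite /= ?addr0 ?add0r //; apply/val_inj. Qed.

Definition Gm : 'M['F_2]_22 := (\matrix_(i, j) (nth false (nth [::] rowsL i) j)%:R)%R.
Definition vec (s : seq bool) : 'rV['F_2]_22 := (\row_j (nth false s j)%:R)%R.

Lemma vec_xorl s t : vec (xorl s t) = (vec s + vec t)%R.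
Proof. by apply/rowP => j; rewrite !mxE nth_xorl F2_xor. Qed.

Lemma vec_nil : vec [::] = 0%R.
Proof. by apply/rowP => j; rewrite !mxE nth_nil. Qed.

Lemma sum_xsum n b rs : size b = n -> size rs = n ->
  (\sum_(k < n) (nth false b k)%:R *: vec (nth [::] rs k))%R = vec (xsum b rs).
Proof.
elim: n b rs => [|n IH] b rs.
  by case: b => // _; rewrite big_ord0 vec_nil.
case: b => [|c b] //; case: rs => [|r rs] // [Hb] [Hr].
rewrite big_ord_recl /=.
have -> : (\sum_(i < n) (nth false (c :: b) (lift ord0 i))%:R *: vec (nth [::] (r :: rs) (lift ord0 i)))%R
   = (\sum_(k < n) (nth false b k)%:R *: vec (nth [::] rs k))%R by [].
rewrite IH //.
by case: c; rewrite ?scale1r ?scale0r ?add0r // vec_xorl.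
Qed.

Lemma vec_mul b : size b = 22 -> (vec b *m Gm)%R = vec (xsum b rowsL).
Proof.
move=> Hb; rewrite mulmx_sum_row.
transitivity (\sum_(k < 22) (nth false b k)%:R *: vec (nth [::] rowsL k))%R.
  apply: eq_bigr => k _; congr (_ *: _)%R; first by rewrite mxE.
  by apply/rowP => j; rewrite !mxE.
by apply: sum_xsum.
Qed.

Lemma sum_count n s : size s <= n -> \sum_(j < n) nth false s j = count id s.
Proof.
elim: n s => [|n IH] s Hs.
  by case: s Hs => // _; rewrite big_ord0.
case: s Hs => [|c s] Hs.
  by rewrite big1 // => j _; rewrite nth_nil.
by rewrite big_ord_recl /= IH.
Qed.

Lemma wt_vec s : size s <= 22 -> #|[set j : 'I_22 | (vec s) ord0 j != 0%R]| = count id s.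
Proof.
move=> Hs; rewrite -(sum_count Hs) -sum1_card big_mkcond /=.
apply: eq_bigr => j _; rewrite inE mxE.
by case: (nth false s j); rewrite ?eqxx ?oner_neq0.
Qed.

Lemma size_xorl s t : size (xorl s t) = maxn (size s) (size t).
Proof. elim: s t => [|a s IH] [|b t] //=; by rewrite IH maxnSS. Qed.

Lemma size_xsum n b rs : all (fun r => size r <= n) rs -> size (xsum b rs) <= n.
Proof.
elim: rs b => [|r rs IH] [|c b] //= /andP[Hr Hrs].
case: c; last by apply: IH.
by rewrite size_xorl geq_max Hr IH.
Qed.

Lemma rows_size : all (fun r => size r <= 22) rowsL. Proof. by vm_compute. Qed.

Lemma dH_eq x y : dH (linker Gm x) (linker Gm y) =
  #|[set j : 'I_22 | ((y - x) *m Gm)%R ord0 j != 0%R]|.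
Proof.
rewrite /dH /linker; apply: eq_card => j; rewrite !inE mulmxBl !mxE subr_eq0.
by rewrite eq_sym.
Qed.

Lemma F2_neq0 (a : 'F_2) : (((a != 0)%R)%:R)%R = a.
Proof. by case: (F2_cases a) => ->; rewrite ?eqxx ?oner_neq0. Qed.

Lemma lower (i : 'I_22) x y : pd_pair i x y ->
  nth 0 Dvals i <= dH (linker Gm x) (linker Gm y).
Proof.
move=> /andP[/andP[/forallP Hpre /eqP Hx] /eqP Hy].
rewrite dH_eq.
set z := (y - x)%R.
pose b := mkseq (fun j => z ord0 (inord j) != 0%R) 22.
have Hbs : size b = 22 by rewrite size_mkseq.
have Hzb : z = vec b.
  by apply/rowP => j; rewrite [RHS]mxE /b nth_mkseq // inord_val F2_neq0.
have Hpre' : forall j, j < i -> nth false b j = false.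
  move=> j Hj; have Hj22 : j < 22 by apply: ltn_trans Hj (ltn_ord i).
  rewrite /b nth_mkseq // /z !mxE.
  have /implyP := Hpre (inord j); rewrite inordK // => /(_ Hj) /eqP ->.
  by rewrite subrr eqxx.
have Hbi : nth false b i = true.
  by rewrite /b nth_mkseq // /z !mxE inord_val Hx Hy subr0 oner_neq0.
rewrite Hzb vec_mul // wt_vec; last by apply: size_xsum rows_size.
rewrite (xsum_drop rowsL Hpre') (drop_nth false); last by rewrite Hbs.
rewrite (drop_nth [::] (n:=i)) // Hbi /=.
move: check_lo_ok; rewrite /check_lo => /allP /(_ i).
rewrite mem_iota /= => /(_ (ltn_ord i)) /allcomb_sound; apply.
by rewrite !size_drop.
Qed.

Lemma upper (i : 'I_22) : exists x y, pd_pair i x y /\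
  dH (linker Gm x) (linker Gm y) = nth 0 Dvals i.
Proof.
move: check_wit_ok; rewrite /check_wit => /allP /(_ i).
rewrite mem_iota /= => /(_ (ltn_ord i)).
set wb := nth [::] wits i.
case/and4P => /eqP Hs /allP Hall Hi /eqP Hc.
exists 0%R, (vec wb); split.
  apply/andP; split; [apply/andP; split|]; rewrite ?mxE ?Hi //.
  apply/forallP => j; apply/implyP => Hj; rewrite !mxE.
  have := Hall j; rewrite mem_iota /= => /(_ Hj) /negbTE ->.
  by [].
by rewrite dH_eq subr0 vec_mul // wt_vec ?Hc //; apply: size_xsum rows_size.
Qed.

Lemma bigmin_le (I : finType) (P : pred I) (F : I -> nat) m i0 :
  P i0 -> \big[minn/m]_(i | P i) F i <= F i0.
Proof.
move=> H; have : i0 \in index_enum I by rewrite mem_index_enum.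
elim: (index_enum I) => [|a r IH] //; rewrite inE big_cons => /orP[/eqP <-|Hr].
  by rewrite H geq_minl.
case: (P a); last exact: IH.
by apply: leq_trans (geq_minr _ _) (IH Hr).
Qed.

Lemma bigmin_le0 (I : finType) (F : I -> nat) m i0 :
  \big[minn/m]_i F i <= F i0.
Proof. exact: (@bigmin_le I xpredT). Qed.

Lemma bigmin_ge (I : finType) (P : pred I) (F : I -> nat) m D :
  D <= m -> (forall i, P i -> D <= F i) -> D <= \big[minn/m]_(i | P i) F i.
Proof.
move=> Hm H; elim/big_ind: _ => //.
by move=> a b Ha Hb; rewrite leq_min Ha Hb.
Qed.

Lemma Dle (i : 'I_22) : nth 0 Dvals i <= 22.
Proof.
have : all (fun d => d <= 22) Dvals by [].
by move/allP; apply; rewrite mem_nth.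
Qed.

Lemma pdist_eq (i : 'I_22) : pdist (linker Gm) i = nth 0 Dvals i.
Proof.
apply/eqP; rewrite eqn_leq; apply/andP; split.
  have [x [y [Hp Hd]]] := upper i.
  rewrite /pdist; apply: leq_trans (bigmin_le0 _ _ x) _.
  by rewrite -Hd; apply: bigmin_le.
rewrite /pdist; apply: bigmin_ge => [|x _]; first exact: Dle.
apply: bigmin_ge => [|y Hp]; first exact: Dle.
exact: lower.
Qed.

Lemma Dpos (i : 'I_22) : 0 < nth 0 Dvals i.
Proof.
have : all (fun d => 0 < d) Dvals by [].
by move/allP; apply; rewrite mem_nth.
Qed.

Lemma Gm_unit : Gm \in unitmx.
Proof.
rewrite -row_free_unit -kermx_eq0; apply/rowV0P => v /sub_kermxP vG0.
apply/eqP; apply/negPn/negP => Hv.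
have [j Hj] : exists j, v ord0 j != 0%R.
  apply/existsP; move: Hv; apply: contraR => /existsPn H.
  apply/eqP/rowP => j; rewrite mxE; exact/eqP/negbNE/H.
have ex : exists k, (k < 22) && (v ord0 (inord k) != 0%R).
  by exists (val j); rewrite ltn_ord inord_val Hj.
case: (ex_minnP ex) => k /andP[Hk Hvk] Hmin.
pose i : 'I_22 := Ordinal Hk.
have Hik : inord k = i by apply/val_inj; rewrite /= inordK.
rewrite Hik in Hvk.
have Hp : pd_pair i 0%R v.
  apply/andP; split; [apply/andP; split|].
  - apply/forallP => j'; apply/implyP => Hj'; rewrite mxE eq_sym.
    apply/negPn/negP => Hvj.
    have := Hmin (val j'); rewrite ltn_ord inord_val Hvj => /(_ isT).
    by rewrite leqNgt Hj'.
  - by rewrite mxE.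
  - by case: (F2_cases (v ord0 i)) Hvk => ->; rewrite ?eqxx.
have := lower Hp; rewrite dH_eq subr0 vG0.
have -> : [set j : 'I_22 | (0 : 'M['F_2]_(1,22))%R ord0 j != 0%R] = set0.
  by apply/setP => j'; rewrite !inE mxE eqxx.
by rewrite cards0 leqNgt Dpos.
Qed.

Theorem mainTheorem15 :
  exists G : 'M['F_2]_22,
    G \in unitmx /\
    pdist_seq (linker G) =
      [:: 1; 2; 2; 2; 2; 2; 4; 4; 4; 4; 4; 4; 8; 8; 8; 8; 8; 8; 8; 12; 12; 16]%N.
Proof.
exists Gm; split; first exact: Gm_unit.
rewrite /pdist_seq (eq_map pdist_eq).
by rewrite (map_comp (nth 0 Dvals) val) val_enum_ord.
Qed.
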